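(* Let $0<m<M$ and let $A,B\in\mathbb{P}_n^+$ satisfy $mI\le A\le MI$ and $mI\le B\le MI$. If $f:[0,\infty)\to[0,\infty)$ is a differentiable convex function with $f(0)=0$, then (i) $(\det f(A))^{1/n}+(\det f(B))^{1/n}\le \frac{f(M)}{M}(\det(A+B))^{1/n}$; (ii) $\frac{f(m)}{m}\big((\det A)^{1/n}+(\det B)^{1/n}\big)\le (\det(f(A)+f(B)))^{1/n}$. If $f:[0,\infty)\to[0,\infty)$ is a differentiable concave function with $f(0)=0$, then (iii) $(\det f(A))^{1/n}+(\det f(B))^{1/n}\le \frac{f(m)}{m}(\det(A+B))^{1/n}$; (iv) $\frac{f(M)}{M}\big((\det A)^{1/n}+(\det B)^{1/n}\big)\le (\det(f(A)+f(B)))^{1/n}$.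
   Context: $\mathbb{P}_n^+$ denotes the set of $n\times n$ complex positive definite matrices, $I$ is the identity matrix, $\le$ is the Löwner order, and $f(A)$ is defined by functional calculus. *)

(* Defs.v *)
From HB Require Import structures.
From mathcomp Require Import all_boot all_order all_algebra.
From mathcomp Require Import all_classical all_reals topology normedtype derive.
From mathcomp Require Import complex.
Set Implicit Arguments. Unset Strict Implicit. Unset Printing Implicit Defensive.
Import Order.TTheory GRing.Theory Num.Theory numFieldNormedType.Exports.
Local Open Scope ring_scope.
Local Open Scope classical_set_scope.
Local Open Scope sesquilinear_scope.

Definition psdmx (R : realType) (n : nat) (A : 'M[R[i]]_n) : Prop :=
  A \is hermsymmx /\ forall v : 'rV[R[i]]_n, 0 <= (v *m A *m v ^t*) 0 0.

Definition posdefmx (R : realType) (n : nat) (A : 'M[R[i]]_n) : Prop :=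
  A \is hermsymmx /\
  forall v : 'rV[R[i]]_n, v != 0 -> 0 < (v *m A *m v ^t*) 0 0.

Definition loewner_le (R : realType) (n : nat) (A B : 'M[R[i]]_n) : Prop :=
  psdmx (B - A).

(* Functional calculus for a real function f applied to a (normal, in
   particular Hermitian) matrix A = U^-1 diag(d) U with U unitary
   (MathComp's spectral decomposition): f(A) = U^-1 diag(f(d)) U, where f
   is applied to the real parts of the (real) eigenvalues. *)
Definition mx_fun (R : realType) (n : nat) (f : R -> R) (A : 'M[R[i]]_n)
  : 'M[R[i]]_n :=
  invmx (spectralmx A)
    *m diag_mx (map_mx (fun z : R[i] => ((f (complex.Re z))%:C)%C)
                       (spectral_diag A))
    *m spectralmx A.

Definition differentiable_nonneg (R : realType) (f : R -> R) : Prop :=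
  (forall x : R, 0 < x -> derivable f x 1) /\
  cvg ((f h - f 0) / h @[h --> 0^'+]).

Definition convex_nonneg (R : realType) (f : R -> R) : Prop :=
  forall x y t : R, 0 <= x -> 0 <= y -> 0 <= t <= 1 ->
    f (t * x + (1 - t) * y) <= t * f x + (1 - t) * f y.

Definition concave_nonneg (R : realType) (f : R -> R) : Prop :=
  forall x y t : R, 0 <= x -> 0 <= y -> 0 <= t <= 1 ->
    t * f x + (1 - t) * f y <= f (t * x + (1 - t) * y).

(* Main.v *)
Require Import Defs.
From HB Require Import structures.
From mathcomp Require Import all_boot all_order all_algebra.
From mathcomp Require Import all_classical all_reals topology normedtype derive.
From mathcomp Require Import complex.
Set Implicit Arguments. Unset Strict Implicit. Unset Printing Implicit Defensive.
Import Order.TTheory GRing.Theory Num.Theory numFieldNormedType.Exports.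
Local Open Scope ring_scope.
Local Open Scope sesquilinear_scope.

Section Gen.
Variable C : numClosedFieldType.
Variable n : nat.
Implicit Types A B U X : 'M[C]_n.

Lemma ctmxM m p q (X : 'M[C]_(m, p)) (Y : 'M[C]_(p, q)) : (X *m Y)^t* = Y^t* *m X^t*.
Proof. by rewrite trmx_mul map_mxM. Qed.

Lemma unitary_tV U : U \is unitarymx -> U^t* *m U = 1%:M.
Proof. by move=> HU; rewrite -invmx_unitary // mulVmx // unitarymx_unit. Qed.

Lemma herm_decomp A : A \is hermsymmx ->
  A = (spectralmx A)^t* *m diag_mx (spectral_diag A) *m spectralmx A.
Proof.
move=> HA; rewrite -invmx_unitary ?spectral_unitarymx //.
exact/orthomx_spectralP/hermitian_normalmx.
Qed.

Lemma quad_diag U (d : 'rV[C]_n) i : U \is unitarymx ->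
  (((delta_mx 0 i : 'rV[C]_n) *m U) *m (U^t* *m diag_mx d *m U) *m ((delta_mx 0 i : 'rV[C]_n) *m U)^t*) 0 0 = d 0 i.
Proof.
move=> HU; rewrite ctmxM trmx_delta map_delta_mx.
rewrite !mulmxA mulmxtVK // -(mulmxA _ U) (unitarymxP HU) mulmx1.
rewrite mul_mx_diag !mxE (bigD1 i) //= big1 ?addr0; last first.
  by move=> k /negPf; rewrite !mxE eq_sym => ->; rewrite andbF mul0r mul0r.
by rewrite !mxE !eqxx mul1r mulr1.
Qed.

Lemma vvt U i : U \is unitarymx ->
  (((delta_mx 0 i : 'rV[C]_n) *m U) *m ((delta_mx 0 i : 'rV[C]_n) *m U)^t*) 0 0 = 1.
Proof.
move=> HU; rewrite ctmxM trmx_delta map_delta_mx mulmxA mulmxtVK //.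
by rewrite mul_delta_mx mxE !eqxx.
Qed.

Lemma vneq0 U i : U \is unitarymx -> (delta_mx 0 i : 'rV[C]_n) *m U != 0.
Proof.
move=> HU; apply/eqP => /(congr1 (mulmx^~ (invmx U))).
rewrite mulmxK ?unitarymx_unit // mul0mx => /matrixP/(_ 0 i).
by rewrite !mxE !eqxx /= => /eqP; rewrite oner_eq0.
Qed.

Lemma quad_scalar (v : 'rV[C]_n) (c : C) : (v *m c%:M *m v^t*) 0 0 = c * (v *m v^t*) 0 0.
Proof. by rewrite mul_mx_scalar -scalemxAl mxE. Qed.

Lemma quadB (v : 'rV[C]_n) A B : (v *m (A - B) *m v^t*) 0 0 = (v *m A *m v^t*) 0 0 - (v *m B *m v^t*) 0 0.
Proof. by rewrite mulmxBr mulmxBl !mxE. Qed.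

Lemma eig_ge0 A : A \is hermsymmx -> (forall v : 'rV_n, 0 <= (v *m A *m v^t*) 0 0) ->
  forall i, 0 <= spectral_diag A 0 i.
Proof.
move=> HA PA i; have := PA ((delta_mx 0 i : 'rV[C]_n) *m spectralmx A).
by rewrite {2}(herm_decomp HA) quad_diag // spectral_unitarymx.
Qed.

Lemma eig_gt0 A : A \is hermsymmx -> (forall v : 'rV_n, v != 0 -> 0 < (v *m A *m v^t*) 0 0) ->
  forall i, 0 < spectral_diag A 0 i.
Proof.
move=> HA PA i; have := PA _ (vneq0 i (spectral_unitarymx A)).
by rewrite {2}(herm_decomp HA) quad_diag ?spectral_unitarymx.
Qed.

Lemma eig_lb A c : A \is hermsymmx -> (forall v : 'rV_n, 0 <= (v *m (A - c%:M) *m v^t*) 0 0) ->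
  forall i, c <= spectral_diag A 0 i.
Proof.
move=> HA PA i; have := PA ((delta_mx 0 i : 'rV[C]_n) *m spectralmx A).
rewrite quadB quad_scalar vvt ?spectral_unitarymx // mulr1.
by rewrite {2}(herm_decomp HA) quad_diag ?spectral_unitarymx // subr_ge0.
Qed.

Lemma eig_ub A c : A \is hermsymmx -> (forall v : 'rV_n, 0 <= (v *m (c%:M - A) *m v^t*) 0 0) ->
  forall i, spectral_diag A 0 i <= c.
Proof.
move=> HA PA i; have := PA ((delta_mx 0 i : 'rV[C]_n) *m spectralmx A).
rewrite quadB quad_scalar vvt ?spectral_unitarymx // mulr1.
by rewrite {2}(herm_decomp HA) quad_diag ?spectral_unitarymx // subr_ge0.
Qed.

Lemma det_conj U X : U \is unitarymx -> \det (U^t* *m X *m U) = \det X.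
Proof.
by move=> HU; rewrite !det_mulmx mulrAC -det_mulmx unitary_tV // det1 mul1r.
Qed.

Lemma det_herm A : A \is hermsymmx -> \det A = \prod_i spectral_diag A 0 i.
Proof.
by move=> HA; rewrite {1}(herm_decomp HA) det_conj ?spectral_unitarymx // det_diag.
Qed.

Lemma herm_of_ct X : X^t* = X -> X \is hermsymmx.
Proof. by move=> HX; apply/is_hermitianmxP; rewrite expr0 scale1r HX. Qed.

Lemma ct_herm X : X \is hermsymmx -> X^t* = X.
Proof. by move=> /is_hermitianmxP; rewrite expr0 scale1r => {2}->. Qed.

Lemma form_diag (w : 'rV[C]_n) g : (w *m diag_mx g *m w^t*) 0 0 = \sum_j g 0 j * (w 0 j * (w 0 j)^*%R).
Proof.
rewrite mul_mx_diag !mxE; apply: eq_bigr => j _; rewrite !mxE.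
by rewrite mulrAC mulrC mulrA.
Qed.

Lemma psd_conj_diag U (g : 'rV[C]_n) : U \is unitarymx -> (forall i, 0 <= g 0 i) ->
  (U^t* *m diag_mx g *m U) \is hermsymmx /\
  forall v : 'rV_n, 0 <= (v *m (U^t* *m diag_mx g *m U) *m v^t*) 0 0.
Proof.
move=> HU Hg; split.
  apply: herm_of_ct; rewrite !ctmxM trmxCK mulmxA; congr (_ *m _ *m _).
  rewrite tr_diag_mx map_diag_mx; congr diag_mx; apply/matrixP => i j.
  by rewrite ord1 !mxE; apply: geC0_conj.
move=> v; have -> : v *m (U^t* *m diag_mx g *m U) *m v^t* =
   (v *m U^t*) *m diag_mx g *m (v *m U^t*)^t*.
  by rewrite ctmxM trmxCK !mulmxA.
rewrite form_diag; apply: sumr_ge0 => j _; exact: mulr_ge0 (Hg j) (mul_conjC_ge0 _).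
Qed.

Lemma amgm (e : 'I_n -> C) : (0 < n)%N -> (forall i, 0 <= e i) ->
  1 + n.-root (\prod_i e i) <= n.-root (\prod_i (1 + e i)).
Proof.
move=> n0 He.
have He1 i : 0 < 1 + e i by rewrite ltr_wpDr.
set P := \prod_i (1 + e i).
have P0 : 0 < P by apply: prodr_gt0 => i _.
have He1' i : 0 <= (1 + e i)^-1 by rewrite invr_ge0 ltW.
have p0 : 0 < n.-root P by rewrite rootC_gt0.
have h1 := (@leif_rootC_AGM C 'I_n predT (fun i => (1 + e i)^-1) (fun i _ => He1' i)).1.
have h2 := (@leif_rootC_AGM C 'I_n predT (fun i => e i / (1 + e i)) (fun i _ => divr_ge0 (He i) (ltW (He1 i)))).1.
rewrite cardT size_enum_ord in h1 h2.
have bp (F : 'I_n -> C) : \prod_(i in predT) F i = \prod_i F i by [].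
have bs (F : 'I_n -> C) : \sum_(i in predT) F i = \sum_i F i by [].
rewrite bp bs in h1; rewrite bp bs in h2.
have := lerD h1 h2.
rewrite -mulrDl -big_split /=.
rewrite [X in _ <= X / _](eq_bigr (fun=> 1)); last first.
  by move=> i _; rewrite -[X in X + _]mul1r -mulrDl mulfV // gt_eqF.
rewrite sumr_const card_ord divff ?pnatr_eq0 -?lt0n //.
rewrite big_split /= prodfV rootCMl ?prodr_ge0 // rootCV ?(ltW P0) //.
by rewrite -/P -[X in X + _ <= _]mul1r -mulrDl ler_pdivrMr // mul1r.
Qed.

Lemma herm_congr (W : 'M[C]_n) B : B \is hermsymmx -> (W *m B *m W^t*) \is hermsymmx.
Proof. by move=> HB; apply: herm_of_ct; rewrite ctmxM ctmxM trmxCK (ct_herm HB) mulmxA. Qed.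

Lemma minkowski A B : (0 < n)%N -> A \is hermsymmx ->
  (forall v : 'rV_n, v != 0 -> 0 < (v *m A *m v^t*) 0 0) -> B \is hermsymmx ->
  (forall v : 'rV_n, 0 <= (v *m B *m v^t*) 0 0) ->
  n.-root (\det A) + n.-root (\det B) <= n.-root (\det (A + B)).
Proof.
move=> n0 HA PA HB PB.
set U := spectralmx A; set d := spectral_diag A.
have HU : U \is unitarymx by apply: spectral_unitarymx.
have dpos i : 0 < d 0 i by apply: eig_gt0.
set s := \row_i (sqrtC (d 0 i))^-1.
have s0 i : 0 <= s 0 i by rewrite mxE invr_ge0 sqrtC_ge0 ltW.
set W := diag_mx s *m U.
have Wt : W^t* = U^t* *m diag_mx s.
  rewrite ctmxM tr_diag_mx map_diag_mx; congr (_ *m diag_mx _).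
  by apply/matrixP => i j; rewrite ord1 !mxE; apply: geC0_conj; rewrite invr_ge0 sqrtC_ge0 ltW.
have WA : W *m A *m W^t* = 1%:M.
  rewrite Wt [in X in X *m _ = _](herm_decomp HA) -/U -/d.
  rewrite !mulmxA mulmxtVK // -(mulmxA _ U) (unitarymxP HU) mulmx1.
  apply/matrixP => i j; rewrite mul_mx_diag mul_diag_mx !mxE.
  case: eqP => [->|_]; last by rewrite mulr0n mulr0 mul0r.
  rewrite !mulr1n mulrAC -expr2 exprVn sqrtCK mulVf //.
  by rewrite (gt_eqF (dpos j)).
clearbody W.
set Cm := W *m B *m W^t*.
have HC : Cm \is hermsymmx.
  exact: herm_congr.
have PC (v : 'rV[C]_n) : 0 <= (v *m Cm *m v^t*) 0 0.
  have -> : v *m Cm *m v^t* = (v *m W) *m B *m (v *m W)^t*.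
    by rewrite /Cm ctmxM !mulmxA.
  exact: PB.
set V := spectralmx Cm; set e := spectral_diag Cm.
have HV : V \is unitarymx by apply: spectral_unitarymx.
have e0 i : 0 <= e 0 i by apply: eig_ge0.
set k := \det W * \det (W^t*).
have detWX X : \det (W *m X *m W^t*) = k * \det X.
  by rewrite !det_mulmx mulrAC.
have k_ge0 : 0 <= k.
  by rewrite /k det_map_mx det_tr mul_conjC_ge0.
have k1 : k * \det A = 1 by rewrite -detWX WA det1.
have k0 : k != 0 by apply/eqP => k0; move: k1; rewrite k0 mul0r => /eqP; rewrite eq_sym oner_eq0.
have dB : k * \det B = \prod_i e 0 i by rewrite -detWX -/Cm det_herm.
have dAB : k * \det (A + B) = \prod_i (1 + e 0 i).
  rewrite -detWX mulmxDr mulmxDl WA -/Cm.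
  have -> : 1%:M + Cm = V^t* *m diag_mx (\row_i (1 + e 0 i)) *m V.
    have -> : diag_mx (\row_i (1 + e 0 i)) = 1%:M + diag_mx e.
      by apply/matrixP => i j; rewrite !mxE; case: eqP => _; rewrite ?mulr1n ?mulr0n ?addr0.
    by rewrite mulmxDr mulmxDl mulmx1 unitary_tV // -herm_decomp.
  by rewrite det_conj // det_diag; apply: eq_bigr => i _; rewrite mxE.
have eA : \det A = k^-1 by rewrite -[LHS](mulKf k0) k1 mulr1.
have eB : \det B = k^-1 * \prod_i e 0 i by rewrite -[LHS](mulKf k0) dB.
have eAB : \det (A + B) = k^-1 * \prod_i (1 + e 0 i) by rewrite -[LHS](mulKf k0) dAB.
have ki : 0 <= k^-1 by rewrite invr_ge0.
rewrite eA eB eAB !rootCMl //.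
rewrite -[X in X + _ <= _]mulr1 -mulrDr ler_wpM2l ?rootC_ge0 //.
exact: amgm.
Qed.
End Gen.

Section Real.
Variable R : realType.
Variable n : nat.

Lemma c_between (z : R[i]) a b : ((a%:C)%C <= z) -> (z <= (b%:C)%C) ->
  z = ((complex.Re z)%:C)%C /\ a <= complex.Re z <= b.
Proof.
case: z => x y; rewrite !lecE /= => /andP[/eqP y0 ax] /andP[_ xb].
by subst y; split => //; rewrite ax xb.
Qed.

Lemma mx_fun_decomp f (X : 'M[R[i]]_n) : mx_fun f X =
  (spectralmx X)^t* *m diag_mx (map_mx (fun z : R[i] => ((f (complex.Re z))%:C)%C) (spectral_diag X)) *m spectralmx X.
Proof. by rewrite /mx_fun invmx_unitary // spectral_unitarymx. Qed.

Lemma type1 f c m M (X : 'M[R[i]]_n) : (0 < n)%N -> X \is hermsymmx ->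
  (forall i, (m%:C)%C <= spectral_diag X 0 i <= (M%:C)%C) -> 0 < m -> 0 <= c ->
  (forall x, m <= x <= M -> 0 <= f x <= c * x) ->
  n.-root (\det (mx_fun f X)) <= (c%:C)%C * n.-root (\det X).
Proof.
move=> n0 HX Hd m0 c0 Hf.
rewrite mx_fun_decomp det_conj ?spectral_unitarymx // det_diag (det_herm HX).
have c0C : 0 <= (c%:C)%C :> R[i] by rewrite ler0c.
have dge0 i : 0 <= spectral_diag X 0 i.
  have /andP[h _] := Hd i; apply: le_trans h; rewrite ler0c ltW //.
rewrite -(exprCK n0 c0C) -rootCMl ?exprn_ge0 //.
rewrite ler_rootC ?nnegrE ?mulr_ge0 ?exprn_ge0 ?prodr_ge0 //; last first.
  move=> i _; rewrite mxE.
  have /andP[h1 h2] := Hd i; have [-> hx] := c_between h1 h2.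
  by rewrite ler0c /=; case/andP: (Hf _ hx).
have -> : ((c%:C)%C ^+ n) = \prod_(i < n) (c%:C)%C :> R[i] by rewrite prodr_const card_ord.
rewrite -big_split /=; apply: ler_prod => i _; rewrite mxE.
have /andP[h1 h2] := Hd i; have [-> hx] := c_between h1 h2.
rewrite ler0c /= -rmorphM lecR.
exact: Hf.
Qed.

Lemma conj_lin (U : 'M[R[i]]_n) a b (c : R[i]) :
  U^t* *m diag_mx a *m U - c *: (U^t* *m diag_mx b *m U) = U^t* *m diag_mx (a - c *: b) *m U.
Proof.
rewrite scalemxAl scalemxAr -mulmxBl -mulmxBr; congr (_ *m _ *m _).
by apply/matrixP => i j; rewrite !mxE mulrnBl mulrnAr.
Qed.

Lemma herm_add (P Q : 'M[R[i]]_n) : P \is hermsymmx -> Q \is hermsymmx -> P + Q \is hermsymmx.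
Proof. by move=> HP HQ; apply: herm_of_ct; rewrite linearD /= map_mxD !ct_herm. Qed.

Lemma psd_add (P Q : 'M[R[i]]_n) : (forall v : 'rV_n, 0 <= (v *m P *m v^t*) 0 0) ->
  (forall v : 'rV_n, 0 <= (v *m Q *m v^t*) 0 0) -> forall v : 'rV_n, 0 <= (v *m (P + Q) *m v^t*) 0 0.
Proof. by move=> HP HQ v; rewrite mulmxDr mulmxDl mxE addr_ge0. Qed.

Lemma psd_det_ge0 (P : 'M[R[i]]_n) : P \is hermsymmx -> (forall v : 'rV_n, 0 <= (v *m P *m v^t*) 0 0) ->
  0 <= \det P.
Proof. by move=> HP PP; rewrite det_herm // prodr_ge0 // => i _; apply: eig_ge0. Qed.

Lemma part_psd f c m M (X : 'M[R[i]]_n) : X \is hermsymmx ->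
  (forall i, (m%:C)%C <= spectral_diag X 0 i <= (M%:C)%C) ->
  (forall x, m <= x <= M -> c * x <= f x) ->
  (mx_fun f X - (c%:C)%C *: X) \is hermsymmx /\
  forall v : 'rV_n, 0 <= (v *m (mx_fun f X - (c%:C)%C *: X) *m v^t*) 0 0.
Proof.
move=> HX Hd Hf.
rewrite mx_fun_decomp [X in _ *: X](herm_decomp HX) conj_lin.
apply: psd_conj_diag; first exact: spectral_unitarymx.
move=> i; rewrite !mxE.
have /andP[h1 h2] := Hd i; have [-> hx] := c_between h1 h2.
by rewrite /= -rmorphM -rmorphB ler0c subr_ge0 Hf.
Qed.

Lemma type2 f c m M (X Y : 'M[R[i]]_n) : (0 < n)%N -> posdefmx X -> posdefmx Y ->
  (forall i, (m%:C)%C <= spectral_diag X 0 i <= (M%:C)%C) ->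
  (forall i, (m%:C)%C <= spectral_diag Y 0 i <= (M%:C)%C) -> 0 <= c ->
  (forall x, m <= x <= M -> c * x <= f x) ->
  (c%:C)%C * n.-root (\det (X + Y)) <= n.-root (\det (mx_fun f X + mx_fun f Y)).
Proof.
move=> n0 [HX PX] [HY PY] HdX HdY c0 Hf.
have [HQX PQX] := part_psd HX HdX Hf.
have [HQY PQY] := part_psd HY HdY Hf.
have eQ : mx_fun f X + mx_fun f Y - (c%:C)%C *: (X + Y) =
   (mx_fun f X - (c%:C)%C *: X) + (mx_fun f Y - (c%:C)%C *: Y).
  by rewrite scalerDr opprD addrACA.
have HQ := herm_add HQX HQY; have PQ := psd_add PQX PQY.
rewrite -eQ in HQ PQ.
have c0C : 0 <= (c%:C)%C :> R[i] by rewrite ler0c.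
case: (eqVneq c 0) => [c00|cn0].
  rewrite c00 rmorph0 mul0r rootC_ge0 //.
  rewrite c00 rmorph0 scale0r subr0 in HQ PQ.
  exact: psd_det_ge0.
have cpos : 0 < (c%:C)%C :> R[i] by rewrite ltcR lt0r cn0 c0.
have HP : (c%:C)%C *: (X + Y) \is hermsymmx.
  apply: herm_of_ct; rewrite linearZ /= map_mxZ; congr (_ *: _); first exact: geC0_conj.
  exact: ct_herm (herm_add HX HY).
have PP (v : 'rV[R[i]]_n) : v != 0 -> 0 < (v *m ((c%:C)%C *: (X + Y)) *m v^t*) 0 0.
  move=> v0; rewrite -scalemxAr -scalemxAl mxE mulmxDr mulmxDl mxE.
  by rewrite mulr_gt0 // addr_gt0 ?PX ?PY.
have := minkowski n0 HP PP HQ PQ.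
rewrite [X in _ <= n.-root (\det X)]addrC subrK detZ rootCMl ?exprn_ge0 // exprCK //.
apply: le_trans; rewrite lerDl rootC_ge0 //.
exact: psd_det_ge0.
Qed.
End Real.

Lemma conv_ineq (R : realType) (f : R -> R) x y : convex_nonneg f -> f 0 = 0 ->
  0 < x -> x <= y -> y * f x <= x * f y.
Proof.
move=> Hc f0 x0 xy; have y0 : 0 < y by apply: lt_le_trans xy.
have t01 : 0 <= x / y <= 1.
  by apply/andP; split; [rewrite divr_ge0 ?ltW | rewrite ler_pdivrMr // mul1r].
have := Hc y 0 (x / y) (ltW y0) (lexx _) t01.
rewrite mulr0 addr0 f0 mulr0 addr0 divfK ?gt_eqF // mulrAC ler_pdivlMr //.
by rewrite mulrC.
Qed.

Lemma conc_ineq (R : realType) (f : R -> R) x y : concave_nonneg f -> f 0 = 0 ->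
  0 < x -> x <= y -> x * f y <= y * f x.
Proof.
move=> Hc f0 x0 xy; have y0 : 0 < y by apply: lt_le_trans xy.
have t01 : 0 <= x / y <= 1.
  by apply/andP; split; [rewrite divr_ge0 ?ltW | rewrite ler_pdivrMr // mul1r].
have := Hc y 0 (x / y) (ltW y0) (lexx _) t01.
rewrite mulr0 addr0 f0 mulr0 addr0 divfK ?gt_eqF // mulrAC ler_pdivrMr //.
by rewrite [f x * y]mulrC.
Qed.

Unset Implicit Arguments.

Theorem theorem3p2 (R : realType) (n : nat) (m M : R) (A B : 'M[R[i]]_n) :
  (0 < n)%N -> 0 < m -> m < M ->
  posdefmx A -> posdefmx B ->
  loewner_le ((m%:C)%C%:M) A -> loewner_le A ((M%:C)%C%:M) ->
  loewner_le ((m%:C)%C%:M) B -> loewner_le B ((M%:C)%C%:M) ->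
  (forall f : R -> R,
     (forall x, 0 <= x -> 0 <= f x) ->
     differentiable_nonneg f -> convex_nonneg f -> f 0 = 0 ->
     (n.-root (\det (mx_fun f A)) + n.-root (\det (mx_fun f B))
        <= ((f M / M)%:C)%C * n.-root (\det (A + B)))
     /\
     (((f m / m)%:C)%C * (n.-root (\det A) + n.-root (\det B))
        <= n.-root (\det (mx_fun f A + mx_fun f B))))
  /\
  (forall f : R -> R,
     (forall x, 0 <= x -> 0 <= f x) ->
     differentiable_nonneg f -> concave_nonneg f -> f 0 = 0 ->
     (n.-root (\det (mx_fun f A)) + n.-root (\det (mx_fun f B))
        <= ((f m / m)%:C)%C * n.-root (\det (A + B)))
     /\
     (((f M / M)%:C)%C * (n.-root (\det A) + n.-root (\det B))
        <= n.-root (\det (mx_fun f A + mx_fun f B)))).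
Proof.
move=> n0 m0 mM [HA PA] [HB PB] [_ LA1] [_ LA2] [_ LB1] [_ LB2].
have M0 : 0 < M by apply: lt_trans mM.
have HdA i : (m%:C)%C <= spectral_diag A 0 i <= (M%:C)%C.
  by apply/andP; split; [exact: (eig_lb HA LA1 i) | exact: (eig_ub HA LA2 i)].
have HdB i : (m%:C)%C <= spectral_diag B 0 i <= (M%:C)%C.
  by apply/andP; split; [exact: (eig_lb HB LB1 i) | exact: (eig_ub HB LB2 i)].
have PB' (v : 'rV[R[i]]_n) : 0 <= (v *m B *m v^t*) 0 0.
  case: (eqVneq v 0) => [->|/PB/ltW //]; by rewrite !mul0mx mxE.
have mink := minkowski n0 HA PA HB PB'.
have xpos x : m <= x <= M -> 0 < x by case/andP => h _; apply: lt_le_trans h.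
split=> f fge0 _ Hc f0.
- have c1 : 0 <= f M / M by rewrite divr_ge0 ?fge0 ?ltW.
  have c2 : 0 <= f m / m by rewrite divr_ge0 ?fge0 ?ltW.
  have h1 x : m <= x <= M -> 0 <= f x <= f M / M * x.
    move=> hx; rewrite fge0 /=; last exact: ltW (xpos _ hx).
    rewrite mulrAC ler_pdivlMr // mulrC.
    by rewrite [X in _ <= X]mulrC; apply: conv_ineq => //; [exact: xpos | case/andP: hx].
  have h2 x : m <= x <= M -> f m / m * x <= f x.
    move=> hx; rewrite mulrAC ler_pdivrMr // mulrC [X in _ <= X]mulrC.
    by apply: conv_ineq => //; case/andP: hx.
  split.
  + apply: le_trans (lerD (type1 n0 HA HdA m0 c1 h1) (type1 n0 HB HdB m0 c1 h1)) _.
    by rewrite -mulrDr ler_wpM2l ?ler0c.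
  + apply: le_trans (type2 n0 (conj HA PA) (conj HB PB) HdA HdB c2 h2).
    by rewrite ler_wpM2l ?ler0c.
- have c1 : 0 <= f M / M by rewrite divr_ge0 ?fge0 ?ltW.
  have c2 : 0 <= f m / m by rewrite divr_ge0 ?fge0 ?ltW.
  have h1 x : m <= x <= M -> 0 <= f x <= f m / m * x.
    move=> hx; rewrite fge0 /=; last exact: ltW (xpos _ hx).
    rewrite mulrAC ler_pdivlMr // mulrC [X in _ <= X]mulrC.
    by apply: conc_ineq => //; case/andP: hx.
  have h2 x : m <= x <= M -> f M / M * x <= f x.
    move=> hx; rewrite mulrAC ler_pdivrMr // mulrC [X in _ <= X]mulrC.
    by apply: conc_ineq => //; [exact: xpos | case/andP: hx].
  split.
  + apply: le_trans (lerD (type1 n0 HA HdA m0 c2 h1) (type1 n0 HB HdB m0 c2 h1)) _.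
    by rewrite -mulrDr ler_wpM2l ?ler0c.
  + apply: le_trans (type2 n0 (conj HA PA) (conj HB PB) HdA HdB c1 h2).
    by rewrite ler_wpM2l ?ler0c.
Qed.
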